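(* Let $G$ be a topological group and $A$ a topological $G$-module. For every $p$, the homomorphism $H(j_h^p)^{-1}\circ H(j_v^p)\colon H_c^p(G,A)\to H_{lc}^p(G,A)$ coincides with the homomorphism induced in cohomology by the inclusion $C_c^*(G,A)\hookrightarrow C_{lc}^*(G,A)$.
   Context: A topological $G$-module is an abelian topological group $A$ with an action of $G$ by group automorphisms such that $G\times A\to A$ is continuous. For an identity neighbourhood $U$ of $G$ put $\Gamma_U^0:=G$ and, for $q\ge1$, $\Gamma_U^q:=\{(g_0,\dots,g_q)\in G^{q+1}\mid g_i^{-1}g_j\in U\ \forall i,j\}$. $G$ acts on maps $f\colon G^{n+1}\to A$ by $(g.f)(g_0,\dots,g_n)=g.f(g^{-1}g_0,\dots,g^{-1}g_n)$, and $df(g_0,\dots,g_{n+1})=\sum_i(-1)^if(g_0,\dots,\widehat{g_i},\dots,g_{n+1})$. $C_c^n(G,A)$ is the complex of continuous equivariant maps $G^{n+1}\to A$ with cohomology $H_c^n(G,A)$; $C_{lc}^n(G,A)$ is the complex of equivariant maps whose restriction to $\Gamma_U^n$ is continuous for some identity neighbourhood $U$, with cohomology $H_{lc}^n(G,A)$. $A_{lc}^{p,q}(G,A)$ is the group of maps $f\colon G^{p+1}\times G^{q+1}\to A$ whose restriction to $G^{p+1}\times\Gamma_U^q$ is continuous for some identity neighbourhood $U$, with $d_hf(x_0,\dots,x_{p+1},\vec y)=\sum_i(-1)^if(x_0,\dots,\widehat{x_i},\dots,x_{p+1},\vec y)$ and $d_vf(\vec x,y_0,\dots,y_{q+1})=(-1)^p\sum_i(-1)^if(\vec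 x,y_0,\dots,\widehat{y_i},\dots,y_{q+1})$; $G$ acts by $(g.f)(\vec x,\vec y)=g.f(g^{-1}\vec x,g^{-1}\vec y)$, and $\mathrm{Tot}\,A_{lc}^{*,*}(G,A)^G$ is the total complex of the fixed-point double complex (differential $d_h+d_v$). $j_h\colon C_{lc}^*(G,A)\to\mathrm{Tot}\,A_{lc}^{*,*}(G,A)^G$, $j_h(f)(x_0,\vec y)=f(\vec y)$, and $j_v\colon C_c^*(G,A)\to\mathrm{Tot}\,A_{lc}^{*,*}(G,A)^G$, $j_v(f)(\vec x,y_0)=f(\vec x)$, are chain maps, and $j_h$ induces an isomorphism $H(j_h^p)$ in cohomology. *)

(* Defs.v *)
From HB Require Import structures.
From mathcomp Require Import all_boot all_order all_algebra.
From mathcomp Require Import all_classical all_reals all_analysis.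

Set Implicit Arguments.
Unset Strict Implicit.
Unset Printing Implicit Defensive.

Import GRing.Theory.
Local Open Scope classical_set_scope.
Local Open Scope ring_scope.

Record topGroup := TopGroup {
  tg_sort :> topologicalType;
  tg_mul : tg_sort -> tg_sort -> tg_sort;
  tg_inv : tg_sort -> tg_sort;
  tg_one : tg_sort;
  tg_mulA : associative tg_mul;
  tg_mul1 : left_id tg_one tg_mul;
  tg_mulV : forall x, tg_mul (tg_inv x) x = tg_one;
  tg_mul_cont : continuous (fun z : tg_sort * tg_sort => tg_mul z.1 z.2);
  tg_inv_cont : continuous tg_inv }.

Section Cohomology.
Variables (G : topGroup) (A : topologicalZmodType) (act : G -> A -> A).

Record top_module : Prop := {
  act_add : forall g a b, act g (a + b) = act g a + act g b;
  act_one : forall a, act (tg_one G) a = a;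
  act_mul : forall g h a, act (tg_mul g h) a = act g (act h a);
  act_cont : continuous (fun z : G * A => act z.1 z.2) }.

(** G^(n+1) with the product topology; points are maps 'I_(n+1) -> G. *)
Definition Gpow (n : nat) := {ptws 'I_n.+1 -> G}.

Definition tmul (n : nat) (g : G) (x : Gpow n) : Gpow n :=
  fun i => tg_mul g (x i).

Definition face (n : nat) (i : 'I_n.+2) (x : Gpow n.+1) : Gpow n :=
  fun j => x (lift i j).

Definition cochain (n : nat) := Gpow n -> A.

Definition dcoch (n : nat) (f : cochain n) : cochain n.+1 :=
  fun x => \sum_(i < n.+2) f (face i x) *~ ((-1) ^+ i).

Definition equivariant (n : nat) (f : cochain n) : Prop :=
  forall g x, act g (f (tmul (tg_inv g) x)) = f x.

Definition Cc (n : nat) (f : cochain n) : Prop :=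
  equivariant f /\ continuous f.

Definition Gamma (U : set G) (q : nat) : set (Gpow q) :=
  [set y | forall i j, U (tg_mul (tg_inv (y i)) (y j))].

Definition dcochain (p q : nat) := (Gpow p * Gpow q)%type -> A.

Definition lc_cont (p q : nat) (F : dcochain p q) : Prop :=
  exists U : set G, nbhs (tg_one G) U /\
    {within [set: Gpow p] `*` @Gamma U q, continuous F}.

Definition dfixed (p q : nat) (F : dcochain p q) : Prop :=
  forall g z, act g (F (tmul (tg_inv g) z.1, tmul (tg_inv g) z.2)) = F z.

Definition d_h (p q : nat) (F : dcochain p q) : dcochain p.+1 q :=
  fun z => \sum_(i < p.+2) F (face i z.1, z.2) *~ ((-1) ^+ i).

Definition d_v (p q : nat) (F : dcochain p q) : dcochain p q.+1 :=
  fun z => (\sum_(i < q.+2) F (z.1, face i z.2) *~ ((-1) ^+ i)) *~ ((-1) ^+ p).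

(** Elements of the total complex are families indexed by bidegree (p,q);
    an element of Tot^n is such a family vanishing outside p + q = n. *)
Definition totfam := forall p q : nat, dcochain p q.

Definition totd (F : totfam) : totfam :=
  fun p q z =>
    (match p return dcochain p q with
     | 0 => fun _ => 0
     | p'.+1 => d_h (F p' q) end) z +
    (match q return dcochain p q with
     | 0 => fun _ => 0
     | q'.+1 => d_v (F p q') end) z.

Definition j_v (n : nat) (f : cochain n) : totfam :=
  fun a b z => if (a == n) && (b == 0%N)
               then f (fun i : 'I_n.+1 => z.1 (inord i)) else 0.

Definition j_h (n : nat) (f : cochain n) : totfam :=
  fun a b z => if (a == 0%N) && (b == n)
               then f (fun i : 'I_n.+1 => z.2 (inord i)) else 0.

End Cohomology.

Arguments totd {G A} F p q z.
Arguments j_v {G A n} f p q z.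
Arguments j_h {G A n} f p q z.

(* Main.v *)
Require Import Defs.
From HB Require Import structures.
From mathcomp Require Import all_boot all_order all_algebra.
From mathcomp Require Import all_classical all_reals all_analysis.
From mathcomp Require Import zify.
Set Implicit Arguments.
Unset Strict Implicit.
Import GRing.Theory.
Local Open Scope classical_set_scope.
Local Open Scope ring_scope.

Section Aux.
Variables (G : topGroup) (A : topologicalZmodType).

Definition ext (n : nat) (x : Gpow G n) : nat -> G := fun k => x (inord k).
Definition mk (n : nat) (h : nat -> G) : Gpow G n := fun i => h (val i).
Arguments mk n h : clear implicits.
Definition catf (c : nat) (u v : nat -> G) : nat -> G :=
  fun k => if (k < c)%N then u k else v (k - c)%N.

Lemma mk_eq n (h h' : nat -> G) : (forall k, (k <= n)%N -> h k = h' k) ->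
  mk n h = mk n h'.
Proof. move=> H; apply: functional_extensionality_dep => i; rewrite /mk H //; rewrite -ltnS; exact: ltn_ord. Qed.

Lemma face_mk n (i : 'I_n.+2) (h : nat -> G) :
  face i (mk n.+1 h) = mk n (fun k => h (bump i k)).
Proof. by []. Qed.

Lemma ext_face n (i : 'I_n.+2) (x : Gpow G n.+1) k : (k <= n)%N ->
  ext (face i x) k = ext x (bump i k).
Proof.
move=> kn; rewrite /ext /face; congr x; apply: val_inj => /=.
rewrite inordK; last by rewrite ltnS.
rewrite inordK // /bump; case: (i <= k)%N; rewrite /= ?add1n ?add0n; lia.
Qed.

Lemma catf_lo a k (u v : nat -> G) : (k <= a)%N ->
  (fun j => catf a.+1 u v (bump k j)) = catf a (fun j => u (bump k j)) v.
Proof.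
move=> ka; apply: funext => j; rewrite /catf /bump.
case: (leqP k j) => kj; rewrite ?add1n ?add0n.
  by rewrite ltnS subSS.
have ja : (j < a)%N by lia.
by rewrite ja ltnS ltnW.
Qed.

Lemma catf_hi a m (u v : nat -> G) :
  (fun j => catf a.+1 u v (bump (m + a.+1) j)) = catf a.+1 u (fun j => v (bump m j)).
Proof.
apply: funext => j; rewrite /catf /bump.
case: (ltnP j a.+1) => ja.
  have -> : (m + a.+1 <= j)%N = false by apply/negbTE; rewrite -ltnNge; lia.
  by rewrite add0n ja.
case: (leqP (m + a.+1) j) => h1; rewrite ?add1n ?add0n.
  have -> : (j.+1 < a.+1)%N = false by apply/negbTE; lia.
  have -> : (m <= j - a.+1)%N by lia.
  by rewrite add1n; congr v; lia.
rewrite ltnNge ja /=.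
have -> : (m <= j - a.+1)%N = false by apply/negbTE; lia.
by rewrite add0n.
Qed.

Lemma ptws_cont (X : topologicalType) (I : Type) (K : topologicalType)
  (h : X -> {ptws I -> K}) : (forall i, continuous (fun x => h x i)) -> continuous h.
Proof.
move=> hc x; apply/cvg_sup.
move=> i; move: x; apply/(@continuousP _ (initial_topology (fun f : I -> K => f i))) => B [C oC <-].
have -> : h @^-1` ((fun f : I -> K => f i) @^-1` C) = (fun x => h x i) @^-1` C by [].
by apply: open_comp => // + _; exact: hc.
Qed.

Lemma cocycle_split (p : nat) (f : cochain G A p) :
  (forall x, dcoch f x = 0) -> forall a b (u v : nat -> G), (a + b)%N = p ->
  \sum_(k < a.+1) f (mk p (catf a (fun j => u (bump k j)) v)) *~ ((-1) ^+ k)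
  + (\sum_(m < b.+1) f (mk p (catf a.+1 u (fun j => v (bump m j)))) *~ ((-1) ^+ m))
    *~ ((-1) ^+ a.+1) = 0.
Proof.
move=> hc a b u v hab.
have hh := hc (mk p.+1 (catf a.+1 u v)); rewrite /dcoch in hh.
set F := fun k : nat => f (mk p (fun j => catf a.+1 u v (bump k j))) *~ ((-1) ^+ k).
have e : \sum_(i < p.+2) F i = 0.
  by rewrite -[RHS]hh; apply: eq_bigr.
rewrite -(big_mkord xpredT F) (@big_cat_nat _ _ _ a.+1) // in e; last by lia.
rewrite (_ : \sum_(a.+1 <= i < p.+2) F i = \sum_(0 <= i < p.+2 - a.+1) F (i + a.+1)%N) in e; last first.
  by have := big_addn 0 p.+2 a.+1 xpredT F; rewrite add0n.
have ee : (p.+2 - a.+1 = b.+1)%N by lia.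
rewrite ee !big_mkord in e; rewrite -[RHS]e; congr (_ + _).
  by apply: eq_bigr => k _; rewrite /F catf_lo // -ltnS.
rewrite mulrz_suml; apply: eq_bigr => m _.
by rewrite /F catf_hi -mulrzA -exprD.
Qed.

Lemma signK (x : A) n : x *~ ((-1) ^+ n) *~ ((-1) ^+ n) = x.
Proof. by rewrite -mulrzA -expr2 sqrr_sign mulr1z. Qed.

Lemma signS (x : A) n : x *~ ((-1) ^+ n.+1) = - (x *~ ((-1) ^+ n)).
Proof. by rewrite exprS mulN1r mulrNz. Qed.

Lemma mk_catf0 p (w v : nat -> G) : mk p (catf 0 w v) = mk p v.
Proof. by apply: mk_eq => k _; rewrite /catf ltn0 subn0. Qed.

Lemma mk_catfS p a (u w : nat -> G) : (p <= a)%N -> mk p (catf a.+1 u w) = mk p u.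
Proof. by move=> pa; apply: mk_eq => k kp; rewrite /catf ltnS (leq_trans kp pa). Qed.

Lemma mk_catface_v p c n (i : 'I_n.+2) (u : nat -> G) (y : Gpow G n.+1) :
  (p <= c + n)%N ->
  mk p (catf c u (ext (face i y))) = mk p (catf c u (fun j => ext y (bump i j))).
Proof.
move=> h; apply: mk_eq => k kp; rewrite /catf; case: ifP => // kc.
rewrite ext_face //; lia.
Qed.

Lemma mk_catface_u p a (i : 'I_a.+2) (v : nat -> G) (x : Gpow G a.+1) :
  mk p (catf a.+1 (ext (face i x)) v) = mk p (catf a.+1 (fun j => ext x (bump i j)) v).
Proof.
apply: mk_eq => k kp; rewrite /catf; case: ifP => // kc.
by rewrite ext_face // -ltnS.
Qed.

Definition Fam p (f : cochain G A p) (a b : nat) (z : (Gpow G a * Gpow G b)%type) : A :=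
  if ((a + b).+1 == p)%N then f (mk p (catf a.+1 (@ext a z.1) (@ext b z.2))) *~ ((-1) ^+ a.+1)
  else 0.
Arguments Fam {p} f a b z.

Lemma act_zero (act : G -> A -> A) (hA : top_module act) g : act g 0 = 0.
Proof.
have h := act_add hA g 0 0; rewrite addr0 in h.
by apply: (@addrI _ (act g 0)); rewrite addr0 -h.
Qed.

Lemma act_intmul (act : G -> A -> A) (hA : top_module act) g (x : A) n :
  act g (x *~ n) = act g x *~ n.
Proof.
have hn : forall m : nat, act g (x *+ m) = act g x *+ m.
  elim=> [|m ih]; first by rewrite !mulr0n act_zero.
  by rewrite !mulrS act_add // ih.
have hneg : forall y, act g (- y) = - act g y.
  move=> y; apply/eqP; rewrite -addr_eq0 -act_add // addNr act_zero //.
case: n => m; first by rewrite -!pmulrn hn.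
by rewrite !NegzE !mulrNz hneg -!pmulrn hn.
Qed.

Lemma mk_tmul p a (h : G) (x : Gpow G a) (b : nat) (y : Gpow G b) :
  mk p (catf a.+1 (ext (tmul h x)) (ext (tmul h y))) = tmul h (mk p (catf a.+1 (ext x) (ext y))).
Proof.
by apply: functional_extensionality_dep => i; rewrite /mk /tmul /catf /ext; case: ifP.
Qed.

Lemma Fam_fixed (act : G -> A -> A) (hA : top_module act) p (f : cochain G A p) :
  equivariant act f -> forall a b, dfixed act (Fam f a b).
Proof.
move=> eqf a b g [x y] /=; rewrite /Fam; case: ifP => _; last exact: act_zero.
by rewrite act_intmul // !mk_tmul eqf.
Qed.

Lemma cont_sign (T : topologicalType) (h : T -> A) n :
  continuous h -> continuous (fun z => h z *~ ((-1) ^+ n)).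
Proof.
move=> ch; rewrite -signr_odd; case: (odd _); rewrite ?expr1 ?expr0.
  have -> : (fun z => h z *~ -1) = (fun z => - h z) by apply: funext => z; rewrite mulrN1z.
  by move=> z; apply: continuous_comp; [exact: ch | exact: opp_continuous].
by have -> : (fun z => h z *~ 1) = h by apply: funext => z; rewrite mulr1z.
Qed.

Lemma Fam_lc p (f : cochain G A p) : continuous f -> forall a b, lc_cont (Fam f a b).
Proof.
move=> cf a b; exists setT; split; first exact: filterT.
apply: continuous_subspaceT; case E : ((a + b).+1 == p)%N; rewrite /Fam E; last exact: cst_continuous.
have cM : continuous (fun z : Gpow G a * Gpow G b => mk p (catf a.+1 (ext z.1) (ext z.2))).
  apply: ptws_cont => i; rewrite /mk /catf; case Ei : (nat_of_ord i < a.+1)%N => z.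
    apply: (continuous_comp (f := fst) (g := fun w : Gpow G a => w (inord i))).
      exact: cvg_fst.
    exact: proj_continuous.
  apply: (continuous_comp (f := snd) (g := fun w : Gpow G b => w (inord (i - a.+1)))).
    exact: cvg_snd.
  exact: proj_continuous.
have cfM : continuous (fun z : Gpow G a * Gpow G b => f (mk p (catf a.+1 (ext z.1) (ext z.2)))).
  by move=> z; apply: continuous_comp; [exact: cM | exact: cf].
exact: cont_sign.
Qed.

End Aux.

Theorem mainTheorem5 (G : topGroup) (A : topologicalZmodType)
    (act : G -> A -> A) (hA : top_module act) (p : nat) (f : cochain G A p) :
  Cc act f -> (forall x, dcoch f x = 0) ->
  exists F : totfam G A,
    (forall a b, (a + b).+1 <> p -> forall z, F a b z = 0) /\
    (forall a b, dfixed act (F a b) /\ lc_cont (F a b)) /\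
    (forall a b, (a + b)%N = p -> forall z,
        totd F a b z = j_v f a b z - j_h f a b z).
Proof.
move=> [eqf cf] hc; exists (Fam f); split; [|split].
  by move=> a b hne z; rewrite /Fam; case: eqP.
  by move=> a b; split; [exact: Fam_fixed | exact: Fam_lc].
move=> a b hab z.
have key := cocycle_split hc (ext z.1) (ext z.2) hab.
move: z key; case: a hab => [|a']; case: b => [|b'] hab z key; rewrite /totd.
- rewrite add0n in hab; subst p.
  rewrite !big_ord1 mk_catf0 mk_catfS // expr0 expr1 !mulr1z mulrN1z in key.
  rewrite /j_v /j_h /= addr0.
  move/eqP: key; rewrite subr_eq0 => /eqP key.
  by change (0 = f (@mk G 0 (ext z.1)) - f (@mk G 0 (ext z.2))); rewrite key subrr.
- rewrite add0n in hab; subst p.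
  rewrite big_ord1 mk_catf0 expr0 mulr1z expr1 mulrN1z in key.
  rewrite /d_v /Fam /= add0n eqxx.
  under eq_bigr => i _ do rewrite mk_catface_v ?addSn //.
  under eq_bigr => i _ do rewrite mulrzAC.
  rewrite -mulrz_suml add0r expr0 mulr1z expr1 mulrN1z.
  move/eqP: key; rewrite subr_eq0 => /eqP <-.
  by rewrite /j_v /j_h /= eqxx sub0r.
- rewrite addn0 in hab; subst p.
  rewrite big_ord1 mk_catfS // expr0 mulr1z in key.
  rewrite /d_h /Fam /= addn0 eqxx addr0.
  under eq_bigr => i _ do rewrite mk_catface_u.
  under eq_bigr => i _ do rewrite mulrzAC.
  rewrite -mulrz_suml.
  move/eqP: key; rewrite addr_eq0 => /eqP ->.
  by rewrite mulNrz (signS (f _) a'.+1) mulNrz !opprK signK /j_v /j_h /= eqxx subr0.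
- subst p.
  rewrite /d_h /d_v /Fam /=.
  have -> : ((a' + b'.+1).+1 == a'.+1 + b'.+1)%N = true by apply/eqP; lia.
  have -> : ((a'.+1 + b').+1 == a'.+1 + b'.+1)%N = true by apply/eqP; lia.
  under eq_bigr => i _ do rewrite mk_catface_u.
  under [X in _ + X *~ _]eq_bigr => i _ do rewrite mk_catface_v ?addnS ?addSn //.
  under eq_bigr => i _ do rewrite mulrzAC.
  under [X in _ + X *~ _]eq_bigr => i _ do rewrite mulrzAC.
  rewrite -!mulrz_suml -mulrzDl key mul0rz /j_v /j_h /=.
  have -> : (a'.+1 == a'.+1 + b'.+1)%N = false by apply/negbTE; lia.
  by rewrite subrr.
Qed.
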